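(* Let $D_M>0$ be a constant such that for every $n\in\mathbb N$ and all $x_1,\dots,x_n\in T^*$ with pairwise disjoint supports and $\min\operatorname{supp}(x_k)\ge n$ one has $\|\sum_kx_k\|_{T^*}\le D_M\max_k\|x_k\|_{T^*}$. Let $k\in\mathbb N$ and $k=n_0<n_1<\dots<n_k$. For $j=0,1,\dots,k$ put $R_j=(k,n_j]\times[1,n_j]\subset\mathbb N^2$, and for $j=1,\dots,k$ let $z_j\in P_{R_j\setminus R_{j-1}}(T^*(T^* ))$ with $\|z_j\|\le1$. Then for all scalars $(a_j)_{j=1}^k$, $$\Big\|\sum_{j=1}^ka_jz_j\Big\|\le 3D_M\max_{1\le j\le k}|a_j|.$$
   Context: $T^*$ is the dual of Tsirelson's space $T$ (completion of $c_{00}$ under $\|x\|_T=\max\{\|x\|_\infty,\frac12\sup\sum_{j=1}^n\|E_j(x)\|_T\}$, supremum over $n$ and finite sets $n\le E_1<\dots<E_n$), with $1$-unconditional basis $(e_j)$. $T^*(T^* )$ is the space of sequences $(x_i)$ in $T^*$ with $\sum\|x_i\|e_i$ convergent in $T^*$, normed by $\|(x_i)\|=\|\sum_i\|x_i\|e_i\|_{T^*}$. The $i$-th component is the $i$-th copy of $T^*$, with basis $(e^{(i)}_s)_s$. For $R\subset\mathbb N^2$, $P_R$ is the norm-one projection $\sum_{i,s}a_{(i,s)}e^{(i)}_s\mapsto\sum_{(i,s)\in R}a_{(i,s)}e^{(i)}_s$ (first coordinate = component index $i$, second = basis index $s$). Intervals are in $\mathbb N$. *)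

(* Defs.v *)
From HB Require Import structures.
From mathcomp Require Import all_boot all_order all_algebra.
From mathcomp Require Import all_classical all_reals all_analysis.

Set Implicit Arguments.
Unset Strict Implicit.
Unset Printing Implicit Defensive.

Import Order.TTheory GRing.Theory Num.Theory.
Local Open Scope ring_scope.
Local Open Scope classical_set_scope.

(* INDEXING CONVENTION: a vector is x : nat -> R, and the Rocq coordinate i
   corresponds to the paper's coordinate i+1 (paper indices start at 1). *)

Section Tsirelson.
Variable R : realType.

Definition vec := nat -> R.

Definition restr (E : seq nat) (x : vec) : vec :=
  fun i => if i \in E then x i else 0.

Definition norm_inf (x : vec) : R := sup [set `|x i| | i in [set: nat]].

(* (E_1,...,E_n) admissible: n <= E_1 < E_2 < ... < E_n (paper indices,
   i.e. Rocq element e is paper index e+1). *)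
Definition admissible (Es : seq (seq nat)) : Prop :=
  (forall E, E \in Es -> forall e, e \in E -> (size Es <= e.+1)%N) /\
  (forall j1 j2, (j1 < j2 < size Es)%N ->
     forall a b, a \in nth [::] Es j1 -> b \in nth [::] Es j2 -> (a < b)%N).

(* Standard iterative construction of the Tsirelson norm on c00:
   |x|_0 = |x|_oo, |x|_{m+1} = max(|x|_oo, 1/2 sup sum_j |E_j x|_m);
   |x|_T = sup_m |x|_m (the unique solution of the implicit equation). *)
Fixpoint normT_iter (m : nat) (x : vec) : R :=
  match m with
  | 0%N => norm_inf x
  | m'.+1 => Num.max (norm_inf x)
      (2^-1 * sup [set \sum_(E <- Es) normT_iter m' (restr E x) | Es in admissible])
  end.

Definition normT (x : vec) : R := sup [set normT_iter m x | m in [set: nat]].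

Definition Ts_set (y : vec) : set R :=
  [set `| \sum_(i < p.1) p.2 i * y i | | p in
     [set p : nat * vec | (forall i, (p.1 <= i)%N -> p.2 i = 0) /\ normT p.2 <= 1]].

(* dual norm of Tstar and membership in Tstar = dual of T *)
Definition normTs (y : vec) : R := sup (Ts_set y).
Definition inTs (y : vec) : Prop := has_ubound (Ts_set y).

Definition partial (N : nat) (v : vec) : vec := fun i => if (i < N)%N then v i else 0.

(* membership in Tstar(Tstar): sequences (w_i) in Tstar with sum_i |w_i| e_i convergent in Tstar *)
Definition inTTs (w : nat -> vec) : Prop :=
  (forall i, inTs (w i)) /\
  exists u : vec, inTs u /\
    ((fun N => normTs (fun i => u i - partial N (fun l => normTs (w l)) i)) : nat -> R) @ \oo --> 0.

Definition normTTs (w : nat -> vec) : R := normTs (fun i => normTs (w i)).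

(* P_Rs : first coordinate = component index, second = basis index *)
Definition PR (Rs : nat -> nat -> bool) (w : nat -> vec) : nat -> vec :=
  fun i s => if Rs i s then w i s else 0.

Definition in_PR_TTs (Rs : nat -> nat -> bool) (z : nat -> vec) : Prop :=
  exists w, inTTs w /\ z = PR Rs w.

End Tsirelson.

(* R_box k m = (k, m] x [1, m] in paper indices (shifted by one). *)
Definition Rbox (k m : nat) (i s : nat) : bool := (k <= i < m)%N && (s < m)%N.

(* Main.v *)
Require Import Defs.
From HB Require Import structures.
From mathcomp Require Import all_boot all_order all_algebra.
From mathcomp Require Import all_classical all_reals all_analysis.
Import Order.TTheory GRing.Theory Num.Theory.
Local Open Scope ring_scope.
Local Open Scope classical_set_scope.
From mathcomp Require Import zify ring.

Definition fs {R : realType} (N : nat) (u : vec R) := forall i, (N <= i)%N -> u i = 0.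
Definition l1 {R : realType} (N : nat) (u : vec R) : R := \sum_(i < N) `|u i|.

Lemma restr_fs {R : realType} {N} E {u : vec R} : fs N u -> fs N (restr E u).
Proof. by move=> h i Hi; rewrite /restr h //; case: ifP. Qed.

Lemma l1_ge0 {R : realType} {N} {u : vec R} : 0 <= l1 N u.
Proof. by apply: sumr_ge0 => i _. Qed.

Lemma abs_le_l1 {R : realType} {N} {u : vec R} i : fs N u -> `|u i| <= l1 N u.
Proof.
move=> h; case: (ltnP i N) => Hi; last by rewrite h // normr0 l1_ge0.
rewrite /l1 (bigD1 (Ordinal Hi)) //= lerDl; apply: sumr_ge0 => j _; done.
Qed.

Lemma ninf_hs {R : realType} {N} {u : vec R} : fs N u ->
  has_sup [set `|u i| | i in [set: nat]].
Proof.
move=> h; split; first by exists `|u 0%N|, 0%N.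
by exists (l1 N u) => _ [i _ <-]; apply: abs_le_l1.
Qed.

Lemma ninf_ge {R : realType} {N} {u : vec R} i : fs N u -> `|u i| <= norm_inf u.
Proof. move=> h; rewrite /norm_inf; have := sup_upper_bound (ninf_hs h); apply. by exists i. Qed.

Lemma ninf_le {R : realType} {N} {u : vec R} : fs N u -> norm_inf u <= l1 N u.
Proof.
move=> h; apply: ge_sup; first by exists `|u 0%N|, 0%N.
by move=> _ [i _ <-]; apply: abs_le_l1.
Qed.

Lemma ninf_ge0 {R : realType} {N} {u : vec R} : fs N u -> 0 <= norm_inf u.
Proof. by move=> h; apply: le_trans (ninf_ge 0 h). Qed.

Definition ordered (Es : seq (seq nat)) := forall j1 j2, (j1 < j2 < size Es)%N ->
     forall a b, a \in nth [::] Es j1 -> b \in nth [::] Es j2 -> (a < b)%N.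

Lemma ordered_count {R : realType} (Es : seq (seq nat)) i (c : R) : 0 <= c ->
  ordered Es -> \sum_(E <- Es) (if i \in E then c else 0) <= c.
Proof.
move=> c0; elim: Es => [|E Es IH] Ho; first by rewrite big_nil.
have Ho' : ordered Es.
  move=> j1 j2 /andP[h1 h2] a b ha hb.
  by apply: (Ho j1.+1 j2.+1) ha hb; rewrite /= ltnS h1 ltnS h2.
rewrite big_cons; case: ifP => hiE.
  rewrite big1_seq ?addr0 // => F /andP[_ hF]; case: ifP => // hiF.
  move: hF; case/(nthP [::]) => j hj hjF.
  have hlt : (0 < j.+1 < size (E :: Es))%N by rewrite /= ltnS hj.
  by have := Ho 0%N j.+1 hlt i i hiE; rewrite /= hjF ltnn => /(_ hiF).
by rewrite add0r IH.
Qed.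

Lemma sum_l1_restr {R : realType} N (Es : seq (seq nat)) (u : vec R) :
  ordered Es -> \sum_(E <- Es) l1 N (restr E u) <= l1 N u.
Proof.
move=> Ho; rewrite /l1 exchange_big /=; apply: ler_sum => i _.
apply: le_trans (@ordered_count R Es (nat_of_ord i) _ (normr_ge0 (u i)) Ho).
by apply: ler_sum => E _; rewrite /restr; case: ifP => _; rewrite ?normr0.
Qed.

Lemma adm_ordered {Es : seq (seq nat)} : admissible Es -> ordered Es.
Proof. by case. Qed.

Definition Sset {R : realType} m (u : vec R) : set R :=
  [set \sum_(E <- Es) normT_iter m (restr E u) | Es in admissible].

Lemma adm_nil : admissible [::].
Proof. by split => // j1 j2; rewrite andbF. Qed.

Lemma iterS {R : realType} m (u : vec R) :
  normT_iter m.+1 u = Num.max (norm_inf u) (2^-1 * sup (Sset m u)).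
Proof. by []. Qed.

Lemma Sset_ne {R : realType} m (u : vec R) : Sset m u !=set0.
Proof. by exists 0, [::]; [apply: adm_nil | rewrite big_nil]. Qed.

Lemma iter_l1 {R : realType} m {N} {u : vec R} : fs N u -> normT_iter m u <= l1 N u.
Proof.
elim: m u => [|m IH] u h; first exact: ninf_le.
rewrite iterS ge_max ninf_le //=.
have : sup (Sset m u) <= l1 N u.
  apply: ge_sup; first exact: Sset_ne.
  move=> _ [Es Hadm <-]; apply: le_trans _ (sum_l1_restr N Es u (adm_ordered Hadm)).
  by apply: ler_sum => E _; apply: IH; apply: restr_fs.
move=> hs; apply: le_trans (_ : 2^-1 * l1 N u <= _).
  by rewrite ler_pM2l // invr_gt0.
rewrite ler_pdivrMl // ler_peMl // ?l1_ge0 // ler1n //.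
Qed.

Lemma Sset_hs {R : realType} m {N} {u : vec R} : fs N u -> has_sup (Sset m u).
Proof.
move=> h; split; first exact: Sset_ne.
exists (l1 N u) => _ [Es Hadm <-]; apply: le_trans _ (sum_l1_restr N Es u (adm_ordered Hadm)).
by apply: ler_sum => E _; apply: iter_l1; apply: restr_fs.
Qed.
Lemma iter_mono {R : realType} m {N} {u : vec R} : fs N u -> normT_iter m u <= normT_iter m.+1 u.
Proof.
elim: m u => [|m IH] u h; first by rewrite iterS le_max lexx.
rewrite [normT_iter m.+2 u]iterS iterS ge_max !le_max lexx /=.
apply/orP; right; rewrite ler_pM2l ?invr_gt0 //.
apply: ge_sup; first exact: Sset_ne.
move=> _ [Es Hadm <-]; apply: le_trans (_ : _ <= \sum_(E <- Es) normT_iter m.+1 (restr E u) ) _.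
  by apply: ler_sum => E _; apply: IH; apply: restr_fs.
have := sup_upper_bound (Sset_hs m.+1 h); apply; by exists Es.
Qed.

Lemma iter_mono_le {R : realType} m m' {N} {u : vec R} : fs N u -> (m <= m')%N ->
  normT_iter m u <= normT_iter m' u.
Proof.
move=> h; elim: m' => [|m' IH]; first by rewrite leqn0 => /eqP ->.
rewrite leq_eqVlt => /orP[/eqP -> //|]; rewrite ltnS => /IH hm.
exact: le_trans hm (iter_mono m' h).
Qed.

Lemma normT_hs {R : realType} {N} {u : vec R} : fs N u ->
  has_sup [set normT_iter m u | m in [set: nat]].
Proof.
move=> h; split; first by exists (normT_iter 0 u), 0%N.
by exists (l1 N u) => _ [m _ <-]; apply: iter_l1.
Qed.

Lemma iter_le_normT {R : realType} m {N} {u : vec R} : fs N u -> normT_iter m u <= normT u.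
Proof. move=> h; have := sup_upper_bound (normT_hs h); apply; by exists m. Qed.

Lemma normT_le_l1 {R : realType} {N} {u : vec R} : fs N u -> normT u <= l1 N u.
Proof.
move=> h; apply: ge_sup; first by exists (normT_iter 0 u), 0%N.
by move=> _ [m _ <-]; apply: iter_l1.
Qed.

Lemma ninf_le_normT {R : realType} {N} {u : vec R} : fs N u -> norm_inf u <= normT u.
Proof. by move=> h; apply: (iter_le_normT 0 h). Qed.

Lemma abs_le_normT {R : realType} {N} {u : vec R} i : fs N u -> `|u i| <= normT u.
Proof. by move=> h; apply: le_trans (ninf_le_normT h); apply: ninf_ge h. Qed.

Lemma normT_ge0 {R : realType} {N} {u : vec R} : fs N u -> 0 <= normT u.
Proof. by move=> h; apply: le_trans (abs_le_normT 0 h). Qed.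

Lemma iter_abs {R : realType} m (u v : vec R) : (forall i, `|u i| = `|v i|) ->
  normT_iter m u = normT_iter m v.
Proof.
elim: m u v => [|m IH] u v h.
  by rewrite /= /norm_inf (_ : (fun i => `|u i|) = (fun i => `|v i|)) //; apply: funext.
rewrite !iterS.
have -> : norm_inf u = norm_inf v.
  by rewrite /norm_inf (_ : (fun i => `|u i|) = (fun i => `|v i|)) //; apply: funext.
congr (Num.max _ (2^-1 * sup _)); rewrite /Sset.
congr (image _ _); apply: funext => Es; apply: eq_bigr => E _; apply: IH.
by move=> i; rewrite /restr; case: ifP.
Qed.

Lemma normT_abs {R : realType} (u v : vec R) : (forall i, `|u i| = `|v i|) ->
  normT u = normT v.
Proof.
move=> h; rewrite /normT (_ : (fun m => normT_iter m u) = (fun m => normT_iter m v)) //.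
by apply: funext => m; apply: iter_abs.
Qed.

Lemma scale_fs {R : realType} {N} c {u : vec R} : fs N u -> fs N (fun i => c * u i).
Proof. by move=> h i Hi; rewrite h // mulr0. Qed.

Lemma iter_scale {R : realType} m {N} c {u : vec R} : fs N u ->
  normT_iter m (fun i => c * u i) <= `|c| * normT_iter m u.
Proof.
have hinf : forall (v : vec R), fs N v -> norm_inf (fun i => c * v i) <= `|c| * norm_inf v.
  move=> v hv; apply: ge_sup; first by exists `|c * v 0%N|, 0%N.
  move=> _ [i _ <-]; rewrite normrM ler_wpM2l //; exact: ninf_ge hv.
elim: m u => [|m IH] u h; first exact: hinf.
rewrite !iterS ge_max; apply/andP; split.
  apply: le_trans (hinf _ h) _; rewrite ler_wpM2l // le_max lexx //.
apply: le_trans (_ : _ <= `|c| * (2^-1 * sup (Sset m u))) _; last first.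
  by rewrite ler_wpM2l // le_max lexx orbT.
rewrite mulrCA ler_pM2l ?invr_gt0 //.
apply: ge_sup; first exact: Sset_ne.
move=> _ [Es Hadm <-].
apply: le_trans (_ : _ <= `|c| * \sum_(E <- Es) normT_iter m (restr E u)) _.
  rewrite mulr_sumr; apply: ler_sum => E _.
  rewrite (_ : restr E (fun i => c * u i) = (fun i => c * restr E u i)).
    by apply: IH; apply: restr_fs.
  by apply: funext => i; rewrite /restr; case: ifP; rewrite ?mulr0.
rewrite ler_wpM2l //; have := sup_upper_bound (Sset_hs m h); apply; by exists Es.
Qed.

Lemma normT_scale {R : realType} {N} c {u : vec R} : fs N u ->
  normT (fun i => c * u i) <= `|c| * normT u.
Proof.
move=> h; apply: ge_sup; first by exists (normT_iter 0 (fun i => c * u i)), 0%N.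
move=> _ [m _ <-]; apply: le_trans (iter_scale m c h) _.
by rewrite ler_wpM2l //; apply: iter_le_normT h.
Qed.

Lemma iter_lower {R : realType} m {N} {u : vec R} Es : fs N u -> admissible Es ->
  2^-1 * \sum_(E <- Es) normT_iter m (restr E u) <= normT_iter m.+1 u.
Proof.
move=> h Hadm; rewrite iterS le_max; apply/orP; right.
rewrite ler_pM2l ?invr_gt0 //; have := sup_upper_bound (Sset_hs m h); apply; by exists Es.
Qed.

Lemma sum_approx {R : realType} {N} {x : vec R} : fs N x ->
  forall (Es : seq (seq nat)) (e : R), 0 < e -> exists M, \sum_(E <- Es) normT (restr E x) <=
     \sum_(E <- Es) normT_iter M (restr E x) + e.
Proof.
move=> h; elim => [|E Es IH] e e0.
  by exists 0%N; rewrite !big_nil add0r ltW.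
have e2 : 0 < e / 2 by rewrite divr_gt0.
have [M HM] := IH _ e2.
have hE := restr_fs E h.
have [_ [M1 _ <-] HM1] := sup_adherent e2 (normT_hs hE).
exists (maxn M M1); rewrite !big_cons.
have -> : e = e / 2 + e / 2 by rewrite -splitr.
have H1 : normT (restr E x) <= normT_iter (maxn M M1) (restr E x) + e / 2.
  rewrite -lerBlDr; apply: ltW; apply: lt_le_trans HM1 _.
  by apply: iter_mono_le hE _; rewrite leq_maxr.
have H2 : \sum_(E <- Es) normT_iter M (restr E x) <= \sum_(E <- Es) normT_iter (maxn M M1) (restr E x).
  by apply: ler_sum => F _; apply: iter_mono_le (restr_fs F h) _; rewrite leq_maxl.
rewrite addrACA; apply: lerD => //; apply: le_trans HM _; by rewrite lerD2r.
Qed.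

Lemma normT_lower {R : realType} {N} {x : vec R} Es : fs N x -> admissible Es ->
  \sum_(E <- Es) normT (restr E x) <= 2 * normT x.
Proof.
move=> h Hadm; apply/ler_addgt0Pr => e e0.
have [M HM] := sum_approx h Es _ e0.
apply: le_trans HM _; rewrite lerD2r.
have := iter_lower M Es h Hadm; rewrite -ler_pdivlMl // invrK => H.
by apply: le_trans H _; rewrite ler_pM2l //; apply: iter_le_normT h.
Qed.

Lemma Ts_ne {R : realType} (y : vec R) : Ts_set y !=set0.
Proof.
exists 0, (0%N, fun _ => 0); last by rewrite /= big_ord0 normr0.
split => //=; apply: le_trans (normT_le_l1 (N:=0%N) _) _ => //.
by rewrite /l1 big_ord0.
Qed.

Lemma NTs_ub {R : realType} {y : vec R} {N} {x : vec R} : inTs y -> fs N x -> normT x <= 1 ->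
  `|\sum_(i < N) x i * y i| <= normTs y.
Proof.
move=> hy h hn; have hs : has_sup (Ts_set y) by split; [apply: Ts_ne|].
have := sup_upper_bound hs; apply; by exists (N, x).
Qed.

Lemma NTs_le {R : realType} (y : vec R) (b : R) :
  (forall N (x : vec R), fs N x -> normT x <= 1 -> `|\sum_(i < N) x i * y i| <= b) ->
  normTs y <= b.
Proof.
move=> H; apply: ge_sup; first exact: Ts_ne.
by move=> _ [[N x] [h1 h2] <-]; apply: H.
Qed.

Lemma NTs_ge0 {R : realType} (y : vec R) : 0 <= normTs y.
Proof.
case: (pselect (has_sup (Ts_set y))) => hs; last by rewrite /normTs sup_out.
have := sup_upper_bound hs; apply; exists (0%N, fun _ => 0); last by rewrite /= big_ord0 normr0.
split => //=; apply: le_trans (normT_le_l1 (N:=0%N) _) _ => //.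
by rewrite /l1 big_ord0.
Qed.

Lemma sum_fs_le {R : realType} N L (g : nat -> R) : (forall i, 0 <= g i) ->
  (forall i, (L <= i)%N -> g i = 0) -> \sum_(i < N) g i <= \sum_(i < L) g i.
Proof.
move=> g0 hg; rewrite -!(big_mkord xpredT).
apply: le_trans (_ : _ <= \sum_(0 <= i < N + L) g i) _.
  rewrite [X in _ <= X](big_cat_nat _ (n := N)) ?leq_addr //= lerDl.
  by apply: sumr_ge0 => i _.
rewrite [X in X <= _](big_cat_nat _ (n := L)) ?leq_addl //= [X in _ + X]big1_seq ?addr0 //.
by move=> i /andP[_]; rewrite mem_index_iota => /andP[hi _]; apply: hg.
Qed.

Lemma fs_inTs {R : realType} L (y : vec R) : fs L y -> inTs y.
Proof.
move=> hy; exists (l1 L y) => _ [[N x] [h1 h2] <-] /=.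
apply: le_trans (ler_norm_sum _ _ _) _.
apply: le_trans (_ : _ <= \sum_(i < N) `|y i|) _.
  apply: ler_sum => i _; rewrite normrM -[X in _ <= X]mul1r; apply: ler_wpM2r => //.
  simpl in h1, h2; exact: le_trans (abs_le_normT (N:=N) (u:=x) i h1) h2.
by rewrite /l1; apply: (sum_fs_le N L (fun i => `|y i|)) => // i hi; rewrite hy ?normr0.
Qed.

Lemma NTs_pair {R : realType} {y : vec R} {N} {u : vec R} : inTs y -> fs N u ->
  `|\sum_(i < N) u i * y i| <= normT u * normTs y.
Proof.
move=> hy h; have nu0 := normT_ge0 h.
case: (eqVneq (normT u) 0) => hz.
  rewrite hz mul0r big1 ?normr0 // => i _.
  have := abs_le_normT i h; rewrite hz normr_le0 => /eqP ->; by rewrite mul0r.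
have nup : 0 < normT u by rewrite lt_def hz nu0.
have hv := scale_fs (normT u)^-1 h.
have := NTs_ub hy hv; rewrite -ler_pdivrMl //.
have <- : (normT u)^-1 * \sum_(i < N) u i * y i = \sum_(i < N) (normT u)^-1 * u i * y i.
  by rewrite mulr_sumr; apply: eq_bigr => i _; rewrite mulrA.
rewrite normrM ger0_norm ?invr_ge0 //; apply.
apply: le_trans (normT_scale _ h) _.
by rewrite ger0_norm ?invr_ge0 // mulVf.
Qed.

Lemma NTs_sum {R : realType} m (Y : nat -> vec R) : (forall t, (t < m)%N -> inTs (Y t)) ->
  normTs (fun s => \sum_(t < m) Y t s) <= \sum_(t < m) normTs (Y t).
Proof.
move=> hY; apply: NTs_le => N x h hn.
under eq_bigr => i _ do rewrite mulr_sumr.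
rewrite exchange_big /=; apply: le_trans (ler_norm_sum _ _ _) _.
by apply: ler_sum => t _; apply: NTs_ub => //; apply: hY.
Qed.

Lemma NTs_add {R : realType} (y y' : vec R) : inTs y -> inTs y' ->
  normTs (fun s => y s + y' s) <= normTs y + normTs y'.
Proof.
move=> hy hy'; apply: NTs_le => N x h hn.
under eq_bigr => i _ do rewrite mulrDr.
rewrite big_split /=; apply: le_trans (ler_normD _ _) _.
by apply: lerD; apply: NTs_ub.
Qed.

Lemma NTs_scale {R : realType} (c : R) (y : vec R) : inTs y ->
  normTs (fun s => c * y s) <= `|c| * normTs y.
Proof.
move=> hy; apply: NTs_le => N x h hn.
under eq_bigr => i _ do rewrite mulrCA.
by rewrite -mulr_sumr normrM ler_wpM2l //; apply: NTs_ub.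
Qed.

Lemma NTs_mono {R : realType} (y y' : vec R) : inTs y' -> (forall i, `|y i| <= `|y' i|) ->
  normTs y <= normTs y'.
Proof.
move=> hy' hyy; apply: NTs_le => N x h hn.
pose x' := fun i => if 0 <= y' i then `|x i| else - `|x i|.
have hx' : fs N x' by move=> i hi; rewrite /x' h // normr0 oppr0; case: ifP.
have hax : forall i, `|x' i| = `|x i|.
  by move=> i; rewrite /x'; case: ifP => _; rewrite ?normrN normr_id.
apply: le_trans (ler_norm_sum _ _ _) _.
apply: le_trans (_ : _ <= \sum_(i < N) x' i * y' i) _.
  apply: ler_sum => i _; rewrite normrM.
  apply: le_trans (_ : _ <= `|x i| * `|y' i|) _; first by rewrite ler_wpM2l.
  rewrite /x'; case: ifP => hp; first by rewrite (ger0_norm hp).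
  by rewrite (@ltr0_norm _ (y' i)) ?mulrN ?mulNr // ltNge hp.
apply: le_trans (ler_norm _) _; apply: NTs_ub hx' _ => //.
by rewrite (normT_abs x' x hax).
Qed.

Lemma NTs0 {R : realType} : normTs (fun _ : nat => (0 : R)) = 0.
Proof.
apply/le_anti; rewrite NTs_ge0 andbT; apply: NTs_le => N x _ _.
by rewrite big1 ?normr0 // => i _; rewrite mulr0.
Qed.

Lemma bigmax_ge0 {R : realType} m (F : nat -> R) : 0 <= \big[Num.max/0]_(t < m) F t.
Proof. by rewrite bigmax_idl le_max lexx. Qed.

Lemma two_bound {R : realType} m (E : nat -> seq nat) (Y : nat -> vec R) L :
  admissible (map E (iota 0 m)) -> (forall t, fs L (Y t)) ->
  (forall t s, (t < m)%N -> Y t s != 0 -> s \in E t) ->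
  normTs (fun s => \sum_(t < m) Y t s) <= 2 * \big[Num.max/0]_(t < m) normTs (Y t).
Proof.
move=> Hadm hY hE; set Mx := \big[Num.max/0]_(t < m) normTs (Y t).
have M0 : 0 <= Mx by rewrite /Mx bigmax_idl le_max lexx.
apply: (NTs_le (fun s => \sum_(t < m) Y t s)) => N x h hn.
under eq_bigr => i _ do rewrite mulr_sumr.
rewrite exchange_big /=.
have step : forall t : 'I_m, \sum_(i < N) x i * Y t i = \sum_(i < N) restr (E t) x i * Y t i.
  move=> t; apply: eq_bigr => i _; rewrite /restr; case: ifP => // hi.
  case: (eqVneq (Y t i) 0) => [->|hne]; first by rewrite !mulr0.
  by rewrite (hE t i (ltn_ord t) hne) in hi.
under eq_bigr => t _ do rewrite step.
apply: le_trans (ler_norm_sum _ _ _) _.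
apply: le_trans (_ : _ <= \sum_(t < m) normT (restr (E t) x) * Mx) _.
  apply: ler_sum => t _; apply: le_trans (NTs_pair (fs_inTs _ _ (hY t)) (restr_fs (E t) h)) _.
  apply: ler_wpM2l; first exact: normT_ge0 (restr_fs _ h).
  exact: (le_bigmax _ (fun t : 'I_m => normTs (Y t))).
rewrite -mulr_suml.
have -> : \sum_(t < m) normT (restr (E t) x) = \sum_(F <- map E (iota 0 m)) normT (restr F x).
  by rewrite big_map -(big_mkord xpredT (fun t => normT (restr (E t) x))) /index_iota subn0.
apply: le_trans (_ : _ <= 2 * normT x * Mx) _.
  by apply: ler_wpM2r => //; apply: normT_lower h Hadm.
rewrite -mulrA ler_wpM2l // -[X in _ <= X]mul1r ler_wpM2r //.
Qed.

Lemma NTs_zero {R : realType} (y : vec R) : (forall s, y s = 0) -> normTs y = 0.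
Proof. by move=> h; rewrite (_ : y = fun _ => 0) ?NTs0 //; apply: funext. Qed.

Lemma NTs_abs {R : realType} (y : vec R) : `|normTs y| = normTs y.
Proof. by rewrite ger0_norm // NTs_ge0. Qed.

Local Close Scope classical_set_scope.

Theorem lemma4p11 (R : realType) (DM : R) (HDM0 : 0 < DM)
  (HDM : forall (n : nat) (x : nat -> nat -> R),
     (forall k, (k < n)%N -> inTs (x k)) ->
     (forall k1 k2, (k1 < n)%N -> (k2 < n)%N -> k1 <> k2 ->
        forall i, x k1 i = 0 \/ x k2 i = 0) ->
     (forall k i, (k < n)%N -> x k i != 0 -> (n <= i.+1)%N) ->
     normTs (fun i => \sum_(k < n) x k i) <= DM * \big[Num.max/0]_(k < n) normTs (x k))
  (k : nat) (hk : (0 < k)%N) (n : nat -> nat) (hn0 : n 0%N = k)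
  (hn : forall j, (j < k)%N -> (n j < n j.+1)%N)
  (z : nat -> nat -> nat -> R)
  (hz : forall j, (1 <= j <= k)%N ->
     in_PR_TTs (fun i s => Rbox k (n j) i s && ~~ Rbox k (n j.-1) i s) (z j))
  (hz1 : forall j, (1 <= j <= k)%N -> normTTs (z j) <= 1)
  (a : nat -> R) :
  normTTs (fun i s => \sum_(1 <= j < k.+1) a j * z j i s)
    <= 3 * DM * \big[Num.max/0]_(1 <= j < k.+1) `|a j|.
Proof.
set M := \big[Num.max/0]_(1 <= j < k.+1) `|a j|.
have M0 : 0 <= M by rewrite /M bigmax_idl le_max lexx.
have aM : forall t, (t < k)%N -> `|a t.+1| <= M.
  move=> t ht; rewrite /M; apply: (le_bigmax_seq 0 t.+1 xpredT (fun j => `|a j|)) => //.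
  by rewrite mem_index_iota /=; lia.
have nmono : forall i j, (i <= j <= k)%N -> (n i <= n j)%N.
  move=> i j; elim: j => [|j IH]; first by rewrite leqn0 => /andP[/eqP -> _].
  case/andP; rewrite leq_eqVlt => /orP[/eqP -> //|]; rewrite ltnS => hij hjk.
  apply: leq_trans (IH _) (ltnW (hn _ hjk)); by rewrite hij ltnW.
have nk : forall t, (t <= k)%N -> (k <= n t)%N.
  by move=> t ht; rewrite -{1}hn0; apply: nmono; rewrite ht.
set L := n k.
pose zz t i s := if (t < k)%N then z t.+1 i s else 0.
have hsupp : forall t i s, zz t i s != 0 -> [&& (t < k)%N, (k <= i < n t.+1)%N, (s < n t.+1)%N &
      ~~ ((k <= i < n t)%N && (s < n t)%N)].
  move=> t i s; rewrite /zz; case: ifP => ht; last by rewrite eqxx.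
  have [w [_ ->]] := hz t.+1 ht.
  rewrite /PR /Rbox /=; case: ifP; last by rewrite eqxx.
  by case/andP => /andP[-> ->] ->.
have zzL : forall t i s, ((L <= i)%N || (L <= s)%N) -> zz t i s = 0.
  move=> t i s hL; apply/eqP; apply: contraLR hL => /hsupp /and4P[ht /andP[_ hi] hs _].
  have hL : (n t.+1 <= L)%N by apply: nmono; rewrite ht leqnn.
  by rewrite negb_or -!ltnNge (leq_trans hi hL) (leq_trans hs hL).
have fsz : forall t i, fs L (zz t i) by move=> t i s hs; apply: zzL; rewrite hs orbT.
have hzz1 : forall t, (t < k)%N -> normTs (fun i => normTs (zz t i)) <= 1.
  move=> t ht; have := hz1 t.+1 ht; rewrite /normTTs.
  rewrite (_ : (fun i => normTs (zz t i)) = (fun i => normTs (z t.+1 i))) //.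
  apply: funext => i; congr normTs; apply: funext => s; by rewrite /zz ht.
have inTs_nz : forall t, inTs (fun i => normTs (zz t i)).
  move=> t; apply: (fs_inTs L) => i hi; apply: NTs_zero => s; apply: zzL; by rewrite hi.
have boundA : forall t (v : vec R), (t < k)%N ->
    (forall i, `|v i| <= `|a t.+1| * normTs (zz t i)) -> normTs v <= M.
  move=> t v ht hv.
  apply: le_trans (NTs_mono v (fun i => `|a t.+1| * normTs (zz t i)) _ _) _.
  - apply: (fs_inTs L) => i hi; rewrite (NTs_zero (zz t i)) ?mulr0 // => s.
    by apply: zzL; rewrite hi.
  - by move=> i; rewrite normrM normr_id NTs_abs.
  apply: le_trans (NTs_scale _ _ (inTs_nz t)) _.
  rewrite normr_id; apply: le_trans (aM t ht); rewrite -[X in _ <= X]mulr1.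
  by rewrite ler_wpM2l // hzz1.
pose zA t i s := if (n t <= i)%N then zz t i s else 0.
pose zB t i s := if (n t <= i)%N then 0 else zz t i s.
have fsA : forall t i, fs L (zA t i) by move=> t i s hs; rewrite /zA fsz //; case: ifP.
have fsB : forall t i, fs L (zB t i) by move=> t i s hs; rewrite /zB fsz //; case: ifP.
have zAL : forall t i s, (L <= i)%N -> zA t i s = 0.
  by move=> t i s hi; rewrite /zA zzL ?hi //; case: ifP.
have zBL : forall t i s, (L <= i)%N -> zB t i s = 0.
  by move=> t i s hi; rewrite /zB zzL ?hi //; case: ifP.
have EZ : (fun i s => \sum_(1 <= j < k.+1) a j * z j i s) =
    (fun i s => \sum_(t < k) a t.+1 * zA t i s + \sum_(t < k) a t.+1 * zB t i s).
  apply: funext => i; apply: funext => s.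
  rewrite -big_split /= big_add1 /= -(big_mkord xpredT (fun t => a t.+1 * zA t i s + a t.+1 * zB t i s)).
  apply: eq_big_nat => t /andP[_ ht].
  by rewrite -mulrDr /zA /zB /zz ht; case: ifP; rewrite ?addr0 ?add0r.
rewrite EZ /normTTs.
pose PA := fun i => normTs (fun s => \sum_(t < k) a t.+1 * zA t i s).
pose PB := fun i => normTs (fun s => \sum_(t < k) a t.+1 * zB t i s).
have inA : forall i, inTs (fun s => \sum_(t < k) a t.+1 * zA t i s).
  by move=> i; apply: (fs_inTs L) => s hs; apply: big1 => t _; rewrite fsA // mulr0.
have inB : forall i, inTs (fun s => \sum_(t < k) a t.+1 * zB t i s).
  by move=> i; apply: (fs_inTs L) => s hs; apply: big1 => t _; rewrite fsB // mulr0.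
have PAL : forall i, (L <= i)%N -> PA i = 0.
  by move=> i hi; apply: NTs_zero => s; apply: big1 => t _; rewrite zAL // mulr0.
have PBL : forall i, (L <= i)%N -> PB i = 0.
  by move=> i hi; apply: NTs_zero => s; apply: big1 => t _; rewrite zBL // mulr0.
apply: le_trans (_ : _ <= normTs PA + normTs PB) _.
  apply: le_trans (NTs_mono _ (fun i => PA i + PB i) _ _) _.
  - by apply: (fs_inTs L) => i hi; rewrite PAL // PBL // addr0.
  - move=> i; rewrite NTs_abs ger0_norm ?addr_ge0 ?NTs_ge0 //.
    exact: NTs_add.
  apply: NTs_add; apply: (fs_inTs L) => i hi; by rewrite ?PAL ?PBL.
have stepA : normTs PA <= DM * M.
  pose pA t i := normTs (fun s => a t.+1 * zA t i s).
  have pA_supp : forall t i, pA t i != 0 -> (n t <= i < n t.+1)%N.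
    move=> t i; apply: contraR => hni; apply/eqP; apply: NTs_zero => s.
    rewrite /zA; case: ifP => hti; last by rewrite mulr0.
    case: (eqVneq (zz t i s) 0) => [->|/hsupp /and4P[_ /andP[_ hi] _ _]]; first by rewrite mulr0.
    by move: hni; rewrite hti hi.
  have inpA : forall t, (t < k)%N -> inTs (pA t).
    move=> t _; apply: (fs_inTs L) => i hi; apply: NTs_zero => s; by rewrite zAL // mulr0.
  have HA : normTs (fun i => \sum_(t < k) pA t i) <= DM * \big[Num.max/0]_(t < k) normTs (pA t).
    apply: HDM => //.
    - move=> t1 t2 h1 h2 hne i.
      case: (eqVneq (pA t1 i) 0) => [->|/pA_supp H1]; first by left.
      right; apply/eqP; apply: contraT => /pA_supp H2.
      case: (ltngtP t1 t2) => [lt|gt|eq] //.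
      + have : (n t1.+1 <= n t2)%N by apply: nmono; rewrite lt; lia.
        lia.
      + have : (n t2.+1 <= n t1)%N by apply: nmono; rewrite gt; lia.
        lia.
    - move=> t i ht /pA_supp /andP[hi _]; have := nk t (ltnW ht); lia.
  apply: le_trans (_ : normTs PA <= normTs (fun i => \sum_(t < k) pA t i)) _.
  - apply: NTs_mono.
    + apply: (fs_inTs L) => i hi; apply: big1 => t _; apply: NTs_zero => s; by rewrite zAL // mulr0.
    + move=> i; rewrite NTs_abs ger0_norm; last by apply: sumr_ge0 => t _; apply: NTs_ge0.
      apply: (NTs_sum k (fun t s => a t.+1 * zA t i s)) => t _.
      by apply: (fs_inTs L) => s hs; rewrite fsA // mulr0.
  - apply: le_trans HA _; apply: ler_wpM2l; first exact: ltW.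
    apply: bigmax_le => // t _.
    apply: boundA (ltn_ord t) _ => i; rewrite NTs_abs.
    apply: le_trans (NTs_scale _ _ _) _; first by apply: (fs_inTs L); apply: fsA.
    rewrite ler_wpM2l //; apply: NTs_mono; first by apply: (fs_inTs L); apply: fsz.
    by move=> s; rewrite /zA; case: ifP; rewrite ?normr0.
have stepB : normTs PB <= 2 * (DM * M).
  pose qq t i := normTs (fun s => a t.+1 * zB t i s).
  pose E t := iota (n t) (n t.+1 - n t).
  have Hadm : admissible (map E (iota 0 k)).
    split.
    - move=> F /mapP[t ht ->] e; rewrite mem_iota => /andP[he _]; rewrite size_map size_iota.
      move: ht; rewrite mem_iota add0n => /andP[_ ht]; have := nk t (ltnW ht); lia.
    - rewrite size_map size_iota => j1 j2 /andP[h12 h2] x y.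
      have hj1 : (j1 < k)%N by lia.
      rewrite (nth_map 0%N) ?size_iota // (nth_map 0%N) ?size_iota // !nth_iota // !add0n !mem_iota.
      have := hn j1 hj1; have hm : (n j1.+1 <= n j2)%N by apply: nmono; lia.
      move=> hj /andP[hx1 hx2] /andP[hy1 hy2]; lia.
  have HB : forall i, PB i <= 2 * \big[Num.max/0]_(t < k) qq t i.
    move=> i; apply: (two_bound k E (fun t s => a t.+1 * zB t i s) L Hadm).
    - by move=> t s hs; rewrite fsB // mulr0.
    - move=> t s ht; rewrite mulf_eq0 negb_or => /andP[_].
      rewrite /zB; case: ifP => hti; first by rewrite eqxx.
      move=> hz0.
      have /and4P[_ /andP[hki _] hs1 hns] := hsupp _ _ _ hz0.
      have hit : (i < n t)%N by rewrite ltnNge hti.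
      rewrite hki hit /= -leqNgt in hns.
      rewrite mem_iota; lia.
  pose t0 : 'I_k := Ordinal hk.
  have hex : forall i, {t : 'I_k | \big[Num.max/0]_(t < k) qq t i = qq t i}.
    move=> i; have [t _ ->] := @eq_bigmax _ _ _ 0 t0 xpredT (fun t : 'I_k => qq t i) is_true_true (fun t _ => NTs_ge0 _).
    by exists t.
  pose ts i := sval (hex i).
  have hq : forall i, \big[Num.max/0]_(t < k) qq t i = qq (ts i) i.
    by move=> i; rewrite /ts; case: (hex i).
  pose r t i := if (nat_of_ord (ts i) == t) then qq t i else 0.
  have sumr : forall i, \sum_(t < k) r t i = qq (ts i) i.
    move=> i; rewrite (bigD1 (ts i)) //= /r eqxx big1 ?addr0 // => t ht.
    case: eqP => // He; move: ht; suff -> : t = ts i by rewrite eqxx.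
    by apply: val_inj.
  have qqL : forall t i, (L <= i)%N -> qq t i = 0.
    by move=> t i hi; apply: NTs_zero => s; rewrite zBL // mulr0.
  have qq_supp : forall t i, qq t i != 0 -> (k <= i)%N.
    move=> t i; apply: contraR; rewrite -ltnNge => hi; apply/eqP; apply: NTs_zero => s.
    rewrite /zB; case: ifP; rewrite ?mulr0 // => _.
    case: (eqVneq (zz t i s) 0) => [->|/hsupp /and4P[_ /andP[hki _] _ _]]; first by rewrite mulr0.
    lia.
  have HR : normTs (fun i => \sum_(t < k) r t i) <= DM * \big[Num.max/0]_(t < k) normTs (r t).
    apply: HDM.
    - by move=> t _; apply: (fs_inTs L) => i hi; rewrite /r qqL //; case: ifP.
    - move=> t1 t2 _ _ hne i; rewrite /r.
      case: (eqVneq (nat_of_ord (ts i)) t1) => [e1|_]; last by left.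
      right; case: eqP => // e2; exfalso; apply: hne; by rewrite -e1 -e2.
    - move=> t i ht; rewrite /r; case: ifP => _; last by rewrite eqxx.
      move=> /qq_supp; lia.
  apply: le_trans (_ : normTs PB <= normTs (fun i => 2 * \sum_(t < k) r t i)) _.
    apply: NTs_mono.
    - apply: (fs_inTs L) => i hi; rewrite big1 ?mulr0 // => t _; by rewrite /r qqL //; case: ifP.
    - move=> i; rewrite NTs_abs sumr ger0_norm ?mulr_ge0 ?NTs_ge0 // -hq; apply: HB.
  apply: le_trans (NTs_scale _ _ _) _.
    apply: (fs_inTs L) => i hi; apply: big1 => t _; by rewrite /r qqL //; case: ifP.
  rewrite ger0_norm //; apply: ler_wpM2l => //.
  apply: le_trans HR _; apply: ler_wpM2l; first exact: ltW.
  apply: bigmax_le => // t _; apply: boundA (ltn_ord t) _ => i.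
  rewrite /r; case: ifP => _; last by rewrite normr0 mulr_ge0 ?NTs_ge0.
  rewrite NTs_abs; apply: le_trans (NTs_scale _ _ _) _; first by apply: (fs_inTs L); apply: fsB.
  rewrite ler_wpM2l //; apply: NTs_mono; first by apply: (fs_inTs L); apply: fsz.
  by move=> s; rewrite /zB; case: ifP; rewrite ?normr0.
apply: le_trans (lerD stepA stepB) _.
have -> : 3 * DM * M = DM * M + 2 * (DM * M) by ring.
by [].
Qed.
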